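(* Let $n\geq 1$. Consider the arrangement of the lines $\mathcal{L}_0,\dots,\mathcal{L}_{n-1}$. Then: (i) exactly $n$ of its regions lie in $\mathcal{H}_{n-1}^-$, and their codes are the words $1^k0^{n-k}$, $k=0,1,\dots,n-1$; (ii) the codes of the regions lying in $\mathcal{H}_{n-1}^+$ are exactly the words $\pi 1$ where $\pi$ ranges over $\mathcal{P}_{n-1}$ (each region of the arrangement of $\mathcal{L}_0,\dots,\mathcal{L}_{n-2}$ giving exactly one such region).
   Context: For an integer $m\geq 0$, $\mathcal{L}_m$ is the line $y=mx-m^2$, $H_m(x,y)=y-mx+m^2$, $\mathcal{H}_m^+=\{H_m>0\}$ (the side containing $(-1,1)$) and $\mathcal{H}_m^-=\{H_m<0\}$. For $n\geq 0$, the regions of the arrangement of $\mathcal{L}_0,\dots,\mathcal{L}_{n-1}$ are the connected components of $\mathbb{R}^2\setminus(\mathcal{L}_0\cup\dots\cup\mathcal{L}_{n-1})$ (for $n=0$, the whole plane). Each region lies, for each $i$, entirely in $\mathcal{H}_i^+$ or entirely in $\mathcal{H}_i^-$; its code is the binary word $\sigma_0\sigma_1\cdots\sigma_{n-1}$ with $\sigma_i=1$ if the region lies in $\mathcal{H}_i^+$ and $\sigma_i=0$ if it lies in $\mathcal{H}_i^-$. $\mathcal{P}_n$ is the set of codes of the regions of this arrangement; $\mathcal{P}_0=\{\varepsilon\}$ with $\varepsilon$ the empty word. Words are concatenated; $\sigma^k$ denotes $k$ consecutive copies of the letter $\sigma$, with $\sigma^k=\varepsilon$ for $k\leq 0$.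 *)

(* Defs.v *)
From HB Require Import structures.
From mathcomp Require Import all_boot all_order all_algebra.
From mathcomp Require Import all_classical all_reals all_analysis.
Set Implicit Arguments. Unset Strict Implicit. Unset Printing Implicit Defensive.
Import Order.TTheory GRing.Theory Num.Theory.
Import numFieldNormedType.Exports.
Local Open Scope classical_set_scope.
Local Open Scope ring_scope.

Definition Hm {R : realType} (m : nat) (p : R * R) : R :=
  p.2 - m%:R * p.1 + (m%:R) ^+ 2.

Definition Hplus {R : realType} (m : nat) : set (R * R) := [set p | 0 < Hm m p].
Definition Hminus {R : realType} (m : nat) : set (R * R) := [set p | Hm m p < 0].

Definition arr_compl {R : realType} (n : nat) : set (R * R) :=
  [set p | forall i : nat, (i < n)%N -> Hm i p != 0].

Definition region {R : realType} (n : nat) (C : set (R * R)) : Prop :=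
  exists2 p : R * R, arr_compl n p & C = @connected_component (R * R)%type (arr_compl n) p.

(* w (a bit word, true = 1, false = 0) is the code of the region C *)
Definition has_code {R : realType} (n : nat) (C : set (R * R)) (w : seq bool) : Prop :=
  size w = n /\
  forall i : nat, (i < n)%N ->
    (nth false w i = true -> C `<=` Hplus i) /\ (nth false w i = false -> C `<=` Hminus i).

Definition Pcodes (R : realType) (n : nat) : set (seq bool) :=
  [set w | exists2 C : set (R * R), region n C & has_code n C w].

(* Main.v *)
Require Import Defs.
From HB Require Import structures.
From mathcomp Require Import all_boot all_order all_algebra.
From mathcomp Require Import all_classical all_reals all_analysis.
From mathcomp Require Import ring lra.
Import Order.TTheory GRing.Theory Num.Theory.
Import numFieldNormedType.Exports.
Local Open Scope classical_set_scope.
Section S.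
Import Order.TTheory GRing.Theory Num.Theory.
Local Open Scope ring_scope.
Context {R : realType}.
Lemma Hm_cont (i : nat) : continuous (@Hm R i).
Proof.
move=> p; rewrite /Hm.
apply: cvgD; last exact: cvg_cst.
apply: cvgB; first exact: cvg_snd.
apply: cvgMl_tmp. exact: cvg_fst.
Qed.

Lemma conn_pos (f : R * R -> R) (A : set (R * R)) p q :
  continuous f -> connected A -> (forall x, A x -> f x != 0) ->
  A p -> A q -> 0 < f p -> 0 < f q.
Proof.
move=> cf cA nz Ap Aq fp.
have E : A `&` [set x | 0 < f x] = A.
  apply: cA.
  - by exists p.
  - exists (f @^-1` [set x | 0 < x]) => //.
    by apply: open_comp; [move=> x _; apply: cf | exact: open_gt].
  - exists (f @^-1` [set x | 0 <= x]).
      by apply: closed_comp; [move=> x _; apply: cf | exact: closed_ge].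
    apply/seteqP; split => x [Ax Hx]; split => //=.
      by apply: ltW.
    by rewrite lt_neqAle eq_sym nz.
have : (A `&` [set x | 0 < f x]) q by rewrite E.
by case.
Qed.

Lemma comb_neg (a b t : R) : 0 <= t -> t <= 1 -> a < 0 -> b < 0 ->
  (1 - t) * a + t * b < 0.
Proof.
move=> t0 t1 ha hb.
have [ab|ab] := leP a b.
  have : (1 - t) * a <= (1 - t) * b by apply: ler_wpM2l; lra.
  lra.
have : t * b <= t * a by apply: ler_wpM2l => //; lra.
lra.
Qed.

Definition cell n (p : R * R) : set (R * R) :=
  [set q | arr_compl n q /\ forall i, (i < n)%N -> (0 < Hm i q) = (0 < Hm i p)].

Lemma comp_sub_cell n p : arr_compl n p ->
  connected_component (arr_compl n) p `<=` cell n p.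
Proof.
move=> Ap q Cq; split; first exact: connected_component_sub Cq.
move=> i lt.
have cc := @component_connected _ (arr_compl n) p.
have Cp := connected_component_refl Ap.
have nz : forall x, connected_component (arr_compl n) p x -> Hm i x != 0.
  by move=> x hx; apply: (connected_component_sub hx).
apply/idP/idP => h.
- exact: (@conn_pos _ _ _ _ (Hm_cont i) cc nz Cq Cp h).
- exact: (@conn_pos _ _ _ _ (Hm_cont i) cc nz Cp Cq h).
Qed.

Lemma cell_sub_comp n p : arr_compl n p ->
  cell n p `<=` connected_component (arr_compl n) p.
Proof.
move=> Ap q [Aq sq].
pose g (t : R) := (p.1 + (q.1 - p.1) * t, p.2 + (q.2 - p.2) * t).
have Hg i t : Hm i (g t) = (1 - t) * Hm i p + t * Hm i q.
  by rewrite /Hm /g /=; ring.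
have gc : continuous g.
  move=> t; rewrite /g /continuous_at; apply: (@cvg_pair _ _ _ (nbhs t) (nbhs (p.1 + (q.1 - p.1) * t)) (nbhs (p.2 + (q.2 - p.2) * t))) => /=.
    by apply: cvgD; [exact: cvg_cst | apply: cvgMl_tmp; exact: cvg_id].
  by apply: cvgD; [exact: cvg_cst | apply: cvgMl_tmp; exact: cvg_id].
have sub : g @` `[0, 1] `<=` arr_compl n.
  move=> _ [t tin <-] i lt.
  move: tin; rewrite /= in_itv /= => /andP[t0 t1].
  rewrite Hg.
  have hq0 := Aq i lt; have hp0 := Ap i lt; have e := sq i lt.
  move: hp0 hq0; rewrite !neq_lt => /orP[hp|hp] /orP[hq|hq].
  - by rewrite comb_neg.
  - by move: e; rewrite hq (lt_gtF hp).
  - by move: e; rewrite hp (lt_gtF hq).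
  - apply/orP; right; rewrite -oppr_lt0 opprD -!mulrN.
    by apply: comb_neg => //; rewrite oppr_lt0.
have gC : connected (g @` `[0, 1]).
  apply: connected_continuous_connected; first exact: segment_connected.
  exact: continuous_subspaceT.
have g0 : g 0 = p by rewrite /g !mulr0 !addr0; case: p {Ap sq Hg g gc sub gC}.
have g1 : g 1 = q.
  rewrite /g !mulr1 [RHS]surjective_pairing; congr (_, _); ring.
apply: (connected_component_max _ sub gC).
  by exists 0 => //; rewrite /= in_itv /= lexx ler01.
by exists 1 => //; rewrite /= in_itv /= lexx ler01.
Qed.

Lemma comp_cell n p : arr_compl n p ->
  connected_component (arr_compl n) p = cell n p.
Proof.
by move=> Ap; apply/seteqP; split; [exact: comp_sub_cell | exact: cell_sub_comp].
Qed.
Implicit Types p q : R * R.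
Implicit Types C D : set (R * R).

Lemma arr_compl_le m n p : (m <= n)%N -> arr_compl n p -> arr_compl m p.
Proof. by move=> mn A i im; apply: A; apply: leq_trans mn. Qed.

Lemma pos_of n i p : arr_compl n p -> (i < n)%N -> ~~ (Hm i p < 0) -> 0 < Hm i p.
Proof. by move=> A lt; have := A i lt; rewrite neq_lt => /orP[->|]. Qed.
Arguments pos_of {n i p}.

Lemma code_pt n C w p : has_code n C w -> C p ->
  forall i, (i < n)%N -> nth false w i = (0 < Hm i p).
Proof.
move=> [_ hc] Cp i lt; have [h1 h2] := hc i lt.
case e: (nth false w i).
  by have := h1 e p Cp; rewrite /Hplus /= => ->.
by have := h2 e p Cp; rewrite /Hminus /= => h; rewrite lt_gtF.
Qed.
Arguments code_pt {n C w p}.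

Lemma sign_mul (x y : R) : x != 0 -> y != 0 -> (0 < x * y) = ((0 < x) == (0 < y)).
Proof.
rewrite !neq_lt => /orP[hx|hx] /orP[hy|hy].
- by rewrite nmulr_rgt0 // hy (lt_gtF hx) (lt_gtF hy).
- by rewrite nmulr_rgt0 // (lt_gtF hy) (lt_gtF hx) hy.
- by rewrite pmulr_rgt0 // hx (lt_gtF hy).
- by rewrite pmulr_rgt0 // hx hy.
Qed.

Definition qpt (a c : nat) : R * R :=
  ((a%:R - 2^-1) + (c%:R - 2^-1), (a%:R - 2^-1) * (c%:R - 2^-1)).

Lemma half_pos (i a : nat) : (0 < i%:R - (a%:R - 2^-1) :> R) = (a <= i)%N.
Proof.
have h2 : (0 : R) < 2^-1 by rewrite invr_gt0.
have h3 : (2^-1 : R) < 1 by rewrite invf_lt1 // ltr1n.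
case: (leqP a i) => h.
  have : (a%:R <= i%:R :> R) by rewrite ler_nat.
  move=> h'; apply/idP; lra.
have : ((i.+1)%:R <= a%:R :> R) by rewrite ler_nat.
rewrite -natr1 => h'; apply/negP => h''; lra.
Qed.

Lemma half_nz (i a : nat) : (i%:R - (a%:R - 2^-1) :> R) != 0.
Proof.
have h2 : (0 : R) < 2^-1 by rewrite invr_gt0.
have h3 : (2^-1 : R) < 1 by rewrite invf_lt1 // ltr1n.
case: (leqP a i) => h.
  have : (a%:R <= i%:R :> R) by rewrite ler_nat.
  move=> h'; apply/eqP => h''; lra.
have : ((i.+1)%:R <= a%:R :> R) by rewrite ler_nat.
rewrite -natr1 => h'; apply/eqP => h''; lra.
Qed.

Lemma qpt_Hm a c i : Hm i (qpt a c) = (i%:R - (a%:R - 2^-1)) * (i%:R - (c%:R - 2^-1)).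
Proof. rewrite /Hm /qpt /=; ring. Qed.

Lemma qpt_sign a c i : (0 < Hm i (qpt a c)) = ((a <= i)%N == (c <= i)%N).
Proof. by rewrite qpt_Hm sign_mul ?half_nz // !half_pos. Qed.

Lemma qpt_nz a c i : Hm i (qpt a c) != 0.
Proof. by rewrite qpt_Hm mulf_neq0 ?half_nz. Qed.

Lemma convex_neg p (j i l : nat) : (j <= i <= l)%N -> Hm j p < 0 -> Hm l p < 0 ->
  Hm i p < 0.
Proof.
move=> /andP[ji il] hj hl.
have [<-|ne1] := eqVneq j i; first done.
have [->|ne2] := eqVneq i l; first done.
have ji' : (j%:R < i%:R :> R) by rewrite ltr_nat ltn_neqAle ne1 ji.
have il' : (i%:R < l%:R :> R) by rewrite ltr_nat ltn_neqAle ne2 il.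
have id : (l%:R - j%:R) * Hm i p = (l%:R - i%:R) * Hm j p + (i%:R - j%:R) * Hm l p
   + (l%:R - j%:R) * (i%:R - j%:R) * (i%:R - l%:R).
  rewrite /Hm; ring.
have t1 : (l%:R - i%:R) * Hm j p < 0 by rewrite pmulr_rlt0 // subr_gt0.
have t2 : (i%:R - j%:R) * Hm l p < 0 by rewrite pmulr_rlt0 // subr_gt0.
have t3 : (l%:R - j%:R) * (i%:R - j%:R) * (i%:R - l%:R) < 0 :> R.
  rewrite pmulr_rlt0 ?subr_lt0 // mulr_gt0 // subr_gt0 //; lra.
have : (l%:R - j%:R) * Hm i p < 0 by rewrite id; lra.
by rewrite pmulr_rlt0 // subr_gt0; lra.
Qed.

Lemma lift_pt m p : arr_compl m p -> exists q, [/\ arr_compl m.+1 q,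
  (forall i, (i < m)%N -> (0 < Hm i q) = (0 < Hm i p)) & 0 < Hm m q].
Proof.
move=> Ap.
suff [a [c [ac cm hs]]] : exists a c, [/\ (a <= c)%N, (c <= m)%N &
    forall i, (i < m)%N -> (0 < Hm i p) = ((a <= i)%N == (c <= i)%N)].
  exists (qpt a c); split.
  - by move=> i _; exact: qpt_nz.
  - by move=> i lt; rewrite qpt_sign hs.
  - by rewrite qpt_sign cm (leq_trans ac cm).
case: (pselect (exists i, (i < m)%N && (Hm i p < 0))) => [ex|nex]; last first.
  exists 0%N, 0%N; split => // i lt.
  rewrite eqxx (pos_of Ap lt) //; apply/negP => h; apply: nex; exists i; by rewrite lt h.
case: (ex_minnP ex) => a /andP[am ha] amin.
have ub : forall k, (k < m)%N && (Hm k p < 0) -> (k <= m)%N.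
  by move=> k /andP[/ltnW].
case: (ex_maxnP ex ub) => b /andP[bm hb] bmax.
have ab : (a <= b)%N by apply: amin; rewrite bm hb.
exists a, b.+1; split => //; first exact: leqW.
move=> i lt.
case: (ltnP i a) => h1.
  rewrite ltnNge (ltnW (leq_trans h1 ab)) /=.
  rewrite (pos_of Ap lt) //; apply/negP => h; have := amin i; rewrite lt h => /(_ erefl).
  by rewrite leqNgt h1.
case: (leqP b.+1 i) => h2.
  rewrite /= (pos_of Ap lt) //; apply/negP => h; have := bmax i; rewrite lt h => /(_ erefl).
  by rewrite leqNgt h2.
by rewrite /= lt_gtF // (@convex_neg _ a i b) // h1 -ltnS h2.
Qed.

Lemma has_code_pt n p w : arr_compl n p -> size w = n ->
  (forall i, (i < n)%N -> nth false w i = (0 < Hm i p)) ->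
  has_code n (connected_component (arr_compl n) p) w.
Proof.
move=> Ap sw hw; rewrite comp_cell //; split => // i lt.
split => e x [Ax sx]; rewrite /Hplus /Hminus /=.
  by rewrite sx // -hw // e.
have := Ax i lt; rewrite neq_lt => /orP[//|h].
by move: (sx i lt); rewrite h -hw // e.
Qed.

Lemma region_pt n C : region n C ->
  exists p, [/\ arr_compl n p, C = connected_component (arr_compl n) p & C p].
Proof.
move=> [p Ap ->]; exists p; split => //; exact: connected_component_refl.
Qed.

Lemma same_region n p q : arr_compl n p -> arr_compl n q ->
  (forall i, (i < n)%N -> (0 < Hm i q) = (0 < Hm i p)) ->
  connected_component (arr_compl n) p = connected_component (arr_compl n) q.
Proof.
move=> Ap Aq s; apply: same_connected_component; rewrite comp_cell //; by split.
Qed.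

Lemma code_uniq n C C' w : region n C -> region n C' -> has_code n C w ->
  has_code n C' w -> C = C'.
Proof.
move=> /region_pt[p [Ap -> Cp]] /region_pt[p' [Ap' -> Cp']] hc hc'.
apply: same_region => // i lt.
by rewrite -(code_pt hc' Cp' _ lt) -(code_pt hc Cp _ lt).
Qed.

Lemma nth_code k n i : (i < n)%N ->
  nth false (nseq k true ++ nseq (n - k) false) i = (i < k)%N.
Proof.
move=> lt; rewrite nth_cat size_nseq; case: ifP => h; rewrite nth_nseq ?h //.
by case: ifP.
Qed.

Lemma part3 m D C pi : has_code m D pi ->
  C `<=` Hplus m -> C `<=` D -> has_code m.+1 C (rcons pi true).
Proof.
move=> [spi hD] sub sCD; split; first by rewrite size_rcons spi.
move=> i; rewrite ltnS leq_eqVlt => /orP[/eqP->|lt].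
  by rewrite nth_rcons spi ltnn eqxx; split.
rewrite nth_rcons spi lt; have [h1 h2] := hD i lt.
by split => e x Cx; [apply: h1 | apply: h2] => //; exact: sCD.
Qed.

Lemma lift_region m p : arr_compl m p -> exists q, [/\ arr_compl m.+1 q,
  (forall i, (i < m)%N -> (0 < Hm i q) = (0 < Hm i p)),  0 < Hm m q,
  connected_component (arr_compl m.+1) q `<=` Hplus m &
  connected_component (arr_compl m.+1) q `<=` connected_component (arr_compl m) p].
Proof.
move=> Ap; have [q [Aq sq hq]] := @lift_pt m p Ap.
exists q; split => //.
  by move=> x; rewrite comp_cell // => -[Ax sx]; rewrite /Hplus /= sx.
move=> x; rewrite comp_cell // comp_cell // => -[Ax sx]; split.
  exact: arr_compl_le Ax.
by move=> i lt; rewrite sx ?sq // ltnW.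
Qed.
End S.
Arguments region_pt {R n C}.
Arguments pos_of {R n i p}.
Arguments code_pt {R n C w p}.
Arguments lift_region {R m p}.
Arguments part3 {R m D C pi}.
Arguments code_uniq {R n C C' w}.

Theorem proposition17 (R : realType) (n : nat) (hn : (1 <= n)%N) :
  (* (i) *)
  ((forall k : nat, (k < n)%N ->
      exists! C : set (R * R),
        [/\ region n C, C `<=` Hminus n.-1 &
            has_code n C (nseq k true ++ nseq (n - k) false)]) /\
   (forall C : set (R * R), region n C -> C `<=` Hminus n.-1 ->
      exists2 k : nat, (k < n)%N &
        has_code n C (nseq k true ++ nseq (n - k) false))) /\
  (* (ii) *)
  ((forall w : seq bool,
      (exists C : set (R * R), [/\ region n C, C `<=` Hplus n.-1 & has_code n C w])
      <-> exists2 pi : seq bool, Pcodes R n.-1 pi & w = rcons pi true) /\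
   (forall D : set (R * R), region n.-1 D ->
      exists! C : set (R * R),
        [/\ region n C, C `<=` Hplus n.-1 & C `<=` D]) /\
   (forall (D C : set (R * R)) (pi : seq bool),
      region n.-1 D -> has_code n.-1 D pi ->
      region n C -> C `<=` Hplus n.-1 -> C `<=` D ->
      has_code n C (rcons pi true))).
Proof.
case: n hn => // m _ /=.
split; [split|split; [|split]].
- move=> k lt.
  have Aq : arr_compl m.+1 (@qpt R k m.+1) by move=> i _; exact: qpt_nz.
  have hc : has_code m.+1 (connected_component (arr_compl m.+1) (@qpt R k m.+1))
      (nseq k true ++ nseq (m.+1 - k) false).
    apply: has_code_pt => //.
      by rewrite size_cat !size_nseq subnKC // ltnW.
    move=> i li; rewrite nth_code // qpt_sign.
    have -> : (m < i)%N = false by rewrite ltnNge -ltnS li.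
    by rewrite eqbF_neg -ltnNge.
  exists (connected_component (arr_compl m.+1) (@qpt R k m.+1)); split.
    split => //; first by exists (qpt k m.+1).
    apply: (hc.2 m (ltnSn m)).2.
    by rewrite nth_code // ltnNge -ltnS lt.
  move=> C' [rC' _ hc']; apply: code_uniq hc hc' => //.
  by exists (qpt k m.+1).
- move=> C rC sub.
  have [p [Ap EC Cp]] := region_pt rC.
  have hm : (Hm m p < 0)%R := sub p Cp.
  have ex : exists i, (Hm i p < 0)%R by exists m.
  case: (ex_minnP ex) => k hk kmin.
  have km : (k <= m)%N by apply: kmin.
  exists k => //.
  rewrite EC; apply: has_code_pt => //.
    by rewrite size_cat !size_nseq subnKC // leqW.
  move=> i li; rewrite nth_code //.
  case: (ltnP i k) => h.
    rewrite (pos_of Ap li) //; apply/negP => /kmin; by rewrite leqNgt h.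
  by rewrite lt_gtF // (@convex_neg _ p k i m) // h -ltnS li.
- move=> w; split.
    case=> C [rC sub hc].
    have [p [Ap EC Cp]] := region_pt rC.
    have hm : (0 < Hm m p)%R := sub p Cp.
    have Apm : arr_compl m p by apply: arr_compl_le Ap.
    have sw : size w = m.+1 by case: hc.
    exists (take m w).
      exists (connected_component (arr_compl m) p); first by exists p.
      apply: has_code_pt => //; first by rewrite size_take sw ltnSn.
      move=> i li; rewrite nth_take // (code_pt hc Cp) //.
      exact: ltnW.
    rewrite -cats1 -{1}(cat_take_drop m w) (drop_nth false) ?sw //.
    by rewrite drop_oversize ?sw // (code_pt hc Cp) // hm.
  case=> pi [D rD hD] ->.
  have [p [Ap ED Dp]] := region_pt rD.
  have [q [Aq sq hq sub sCD]] := lift_region Ap.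
  exists (connected_component (arr_compl m.+1) q); split => //.
    by exists q.
  by apply: (part3 hD sub); rewrite ED.
- move=> D rD.
  have [p [Ap ED Dp]] := region_pt rD.
  have [q [Aq sq hq sub sCD]] := lift_region Ap.
  exists (connected_component (arr_compl m.+1) q); split.
    by split => //; [exists q | rewrite ED].
  move=> C' [rC' sub' sCD'].
  have [p' [Ap' EC' Cp']] := region_pt rC'.
  rewrite EC'; apply: same_region => // i.
  rewrite ltnS leq_eqVlt => /orP[/eqP->|li].
    by rewrite hq (sub' p' Cp').
  have := sCD' p' Cp'; rewrite ED comp_cell // => -[_ s'].
  by rewrite s' // sq.
- move=> D C pi _ hD _ sub sCD; exact: part3 hD sub sCD.
Qed.
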